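(* For every integer $k\ge 3$, $\mathcal{C}_2(2k,k,2)\le 2^{2k}+6(2^k-1)$.
   Context: A $q$-covering design $\mathcal{C}_q(n,k,r)$ is a collection of $k$-dimensional subspaces of $\mathbb{F}_q^n$ such that every $r$-dimensional subspace of $\mathbb{F}_q^n$ is contained in at least one member; $\mathcal{C}_q(n,k,r)$ denotes the minimum size of such a collection. *)

(* Defs.v *)
From HB Require Import structures.
From mathcomp Require Import all_boot all_order all_algebra all_field.
Set Implicit Arguments. Unset Strict Implicit. Unset Printing Implicit Defensive.
Import GRing.Theory.
Local Open Scope ring_scope.

(* Subspaces of a finite-dimensional vector space over a finite field form a
   finite type (they are represented by square matrices over F). *)
Import VectorInternalTheory.
HB.instance Definition _ (F : finFieldType) (n : nat) :=
  [Countable of {vspace 'rV[F]_n} by <:].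
Definition vspace_rV_finite_axiom (F : finFieldType) (n : nat) :=
  @pcan_enumP {vspace 'rV[F]_n} _ _ _ (can_pcan (@vs2mxK F 'rV[F]_n)).
HB.instance Definition _ (F : finFieldType) (n : nat) :=
  isFinite.Build {vspace 'rV[F]_n} (@vspace_rV_finite_axiom F n).

Definition is_q_covering (F : finFieldType) (n k r : nat)
    (C : {set {vspace 'rV[F]_n}}) : bool :=
  [forall U in C, \dim U == k] &&
  [forall V : {vspace 'rV[F]_n}, (\dim V == r) ==> [exists U in C, (V <= U)%VS]].

(* The minimum is taken
   over the (finite) type of all sets of subspaces; the default value #|T| of
   the fold is only attained if no covering design exists (never the case
   when r <= k <= n). *)
Definition q_covering_number (F : finFieldType) (n k r : nat) : nat :=
  \big[minn/#|{: {set {vspace 'rV[F]_n}}}|]_(C : {set {vspace 'rV[F]_n}}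
     | is_q_covering k r C) #|C|.

(* Main.v *)
Require Import Defs.
From HB Require Import structures.
From mathcomp Require Import all_boot all_order all_algebra all_field.
From mathcomp Require Import ring zify.
From Stdlib Require Import Lia.
Set Implicit Arguments. Unset Strict Implicit. Unset Printing Implicit Defensive.
Import GRing.Theory.
Local Open Scope ring_scope.

Lemma F2_cases (a : 'F_2) : a = 0 \/ a = 1.
Proof. by case: a => [[|[|n]] //= H]; [left|right]; apply/val_inj. Qed.
Lemma F2_11 : (1 + 1 : 'F_2) = 0. Proof. by apply/val_inj. Qed.

Lemma F2_fano (a0 a1 a2 b0 b1 b2 : 'F_2) : (a0 == 0) && (b0 == 0) || (a1 == 0) && (b1 == 0) || (a0 + a1 == 0) && (b0 + b1 == 0)
 || (a2 == 0) && (b2 == 0) || (a0 + a2 == 0) && (b0 + b2 == 0) || (a1 + a2 == 0) && (b1 + b2 == 0) || (a0 + (a1 + a2) == 0) && (b0 + (b1 + b2) == 0).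
Proof.
by case: (F2_cases a0) => ->; case: (F2_cases a1) => ->; case: (F2_cases a2) => ->; case: (F2_cases b0) => ->; case: (F2_cases b1) => ->; case: (F2_cases b2) => ->; rewrite ?F2_11 ?addr0 ?add0r ?F2_11 ?eqxx ?oner_eq0 ?orbT.
Qed.

Section Construction.
Variables (k : nat) (F0 : finFieldType) (chF : 2 \in [pchar F0]) (cardF : #|F0| = (2 ^ k)%N).
Hypothesis k3 : (3 <= k)%N.
Definition LL := pPrimeCharType chF.
Local Notation L := LL.
Local Notation V := (L * L)%type.

Lemma charL : 2 \in [pchar L]. Proof. exact: chF. Qed.

Lemma dimL : \dim {: L} = k.
Proof.
rewrite pprimeChar_dimf.
have -> : #|(pPrimeCharType chF)| = #|F0| by [].
by rewrite cardF pfactorK.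
Qed.

Definition grf (a b x : L) : V := (x, a * x + b * x ^+ 2).
Fact grf_lin a b : linear (grf a b).
Proof.
move=> c u v; rewrite /grf.
case: (F2_cases c) => ->; rewrite ?scale0r ?add0r ?scale1r //.
rewrite /=; congr (_, _).
rewrite /= sqrrD (mulrn_pchar charL) addr0; ring.
Qed.
HB.instance Definition _ a b := GRing.isLinear.Build 'F_2 L V _ (grf a b) (grf_lin a b).

Definition inj2 (y : L) : V := (0, y).
Fact inj2_lin : linear inj2.
Proof.
move=> c u v; rewrite /inj2 /=; congr (_, _).
by rewrite /= ?scaler0 ?addr0.
Qed.
HB.instance Definition _ := GRing.isLinear.Build 'F_2 L V _ inj2 inj2_lin.

Definition G a b : {vspace V} := limg (linfun (grf a b)).
Lemma memG a b x : grf a b x \in G a b.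
Proof. by rewrite -[grf a b x]lfunE memv_img ?memvf. Qed.


Definition BL := vbasis (fullv : {vspace L}).
Lemma freeBL : free BL. Proof. exact: basis_free (vbasisP _). Qed.

Lemma lt0d : (0 < \dim {: L})%N. Proof. by rewrite dimL; apply: leq_trans k3. Qed.
Lemma lt1d : (1 < \dim {: L})%N. Proof. by rewrite dimL; apply: leq_trans k3. Qed.
Lemma lt2d : (2 < \dim {: L})%N. Proof. by rewrite dimL. Qed.
Definition i0 := Ordinal lt0d.
Definition i1 := Ordinal lt1d.
Definition i2 := Ordinal lt2d.

Definition cfun (i : 'I_(\dim {: L})) (y : L) : ('F_2)^o := coord BL i y.
Fact cfun_lin i : linear (cfun i).
Proof. by move=> c u v; rewrite /cfun linearP. Qed.
HB.instance Definition _ i := GRing.isLinear.Build 'F_2 L ('F_2)^o _ (cfun i) (cfun_lin i).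
Definition cf (i : 'I_(\dim {: L})) : 'Hom(L, ('F_2)^o) := linfun (cfun i).
Lemma cfE i y : cf i y = coord BL i y. Proof. by rewrite lfunE. Qed.
Lemma cfB i (j : 'I_(\dim {: L})) : cf i (BL`_j) = (j == i)%:R.
Proof. by rewrite cfE coord_free // freeBL. Qed.

Definition bv (i : 'I_(\dim {: L})) := BL`_i.
Lemma bv_neq0 i : bv i != 0.
Proof. apply: (free_not0 freeBL); apply: mem_nth; by rewrite size_tuple. Qed.
Lemma bv_inj i j : bv i = bv j -> i = j.
Proof.
move=> /eqP; rewrite /bv nth_uniq ?size_tuple // ?free_uniq ?freeBL //.
by move/eqP/val_inj.
Qed.

Definition gx (x : L) := if x == bv i1 then cf i1 else if x == bv i2 then cf i2 else cf i1 + cf i2.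
Definition fn (x : L) (j : 'I_3) :=
  if val j == 0%N then cf i0 else if val j == 1%N then gx x else cf i0 + gx x.
Definition wit (f : 'Hom(L, ('F_2)^o)) : L := odflt 0 [pick y : L | f y != 0].
Lemma witP (f : 'Hom(L, ('F_2)^o)) (y : L) : f y != 0 -> f (wit f) = 1.
Proof.
move=> fy; rewrite /wit; case: pickP => [z /= fz|/(_ y)]; last by rewrite /= fy.
by case: (F2_cases (f z)) fz => ->; rewrite ?eqxx.
Qed.

Definition Xs (x : L) (j : 'I_3) (b : bool) : {vspace V} :=
  (<[(x, if b then wit (fn x j) else 0%R)]> + (linfun inj2 @: lker (fn x j)))%VS.

Lemma fn_nz x j : exists y, fn x j y != 0.
Proof.
have c01 : cf i0 (bv i0) = 1 by rewrite cfB eqxx.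
have g0 : gx x (bv i0) = 0.
  rewrite /gx; case: ifP => _; first by rewrite cfB.
  case: ifP => _; first by rewrite cfB.
  by rewrite add_lfunE !cfB addr0.
rewrite /fn; case: ifP => _; first by exists (bv i0); rewrite c01 oner_eq0.
case: ifP => _; last by exists (bv i0); rewrite add_lfunE c01 g0 addr0 oner_eq0.
rewrite /gx; case: ifP => _; first by exists (bv i1); rewrite cfB eqxx oner_eq0.
case: ifP => _; first by exists (bv i2); rewrite cfB eqxx oner_eq0.
by exists (bv i1); rewrite add_lfunE !cfB eqxx addr0 oner_eq0.
Qed.


Lemma dim_img_le (aT rT : vectType 'F_2) (f : 'Hom(aT, rT)) (U : {vspace aT}) :
  (\dim (f @: U) <= \dim U)%N.
Proof. by rewrite -(limg_ker_dim f U) leq_addl. Qed.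

Lemma dimG a b : (\dim (G a b) <= k)%N.
Proof. by rewrite -dimL dim_img_le. Qed.

Lemma dimX x j b : (\dim (Xs x j b) <= k)%N.
Proof.
have [y fy] := fn_nz x j.
have h := limg_ker_dim (fn x j) fullv; rewrite capfv dimL in h.
have h1 : (0 < \dim (limg (fn x j)))%N.
  apply: (@leq_trans (\dim <[fn x j y]>)); first by rewrite dim_vline fy.
  by apply: dimvS; rewrite -memvE memv_img ?memvf.
have [hle _] := dimv_add_leqif <[(x, if b then wit (fn x j) else 0%R)]> (linfun inj2 @: lker (fn x j)).
apply: (leq_trans hle).
have hd1 := dim_img_le (linfun inj2) (lker (fn x j)).
have hd2 : (\dim <[(x, if b then wit (fn x j) else 0%R) : V]> <= 1)%N.
  by rewrite dim_vline; case: (_ != 0).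
move: hd1 hd2 h h1.
move: (\dim (linfun inj2 @: _)) (\dim <[_]>) (\dim (lker _)) (\dim (limg _)).
move=> d1 d2 d3 d4; lia.
Qed.

Lemma graph_cover x1 x2 y1 y2 : x1 != 0 -> x2 != 0 -> x1 != x2 ->
  exists a b, grf a b x1 = (x1, y1) /\ grf a b x2 = (x2, y2).
Proof.
move=> h1 h2 h12.
have hD : x1 ^+ 2 * x2 - x1 * x2 ^+ 2 != 0.
  have -> : x1 ^+ 2 * x2 - x1 * x2 ^+ 2 = x1 * x2 * (x1 - x2) by ring.
  by rewrite !mulf_neq0 // subr_eq0.
set b := (y1 * x2 - y2 * x1) / (x1 ^+ 2 * x2 - x1 * x2 ^+ 2).
set a := (y1 - b * x1 ^+ 2) / x1.
exists a, b; rewrite /grf; split; congr (_, _); rewrite /a /b; field; by rewrite ?hD ?h1.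
Qed.


Definition j0 : 'I_3 := @Ordinal 3 0 isT.
Definition j1 : 'I_3 := @Ordinal 3 1 isT.
Definition j2 : 'I_3 := @Ordinal 3 2 isT.

Lemma memXr x j b y : fn x j y = 0 -> ((0, y) : V) \in Xs x j b.
Proof.
move=> fy; apply: (subvP (addvSr _ _)).
have : inj2 y \in (linfun inj2 @: lker (fn x j))%VS.
  by rewrite -[inj2 y]lfunE memv_img // memv_ker fy.
by [].
Qed.

Lemma memXl x j b : ((x, if b then wit (fn x j) else 0) : V) \in Xs x j b.
Proof. by apply: (subvP (addvSl _ _)); rewrite memv_line. Qed.

Lemma X_cover (x yw yz : L) : exists j b,
  ((0, yw) : V) \in Xs x j b /\ ((x, yz) : V) \in Xs x j b.
Proof.
have [j fj] : exists j, fn x j yw = 0.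
  case: (F2_cases (cf i0 yw)) => h0; first by exists j0.
  case: (F2_cases (gx x yw)) => h1; first by exists j1.
  by exists j2; rewrite /fn /= add_lfunE h0 h1 F2_11.
case hb : (fn x j yz != 0).
  exists j, true; split; first exact: memXr.
  have hw := witP hb.
  have h1 : fn x j yz = 1 by case: (F2_cases (fn x j yz)) hb => ->; rewrite ?eqxx.
  have -> : ((x, yz) : V) = (x, wit (fn x j)) + (0, yz - wit (fn x j)).
    by congr (_, _); rewrite /= ?addr0 ?add0r // addrC subrK.
  apply: memvD; first exact: (memXl x j true).
  by apply: memXr; rewrite linearB /= h1 hw subrr.
exists j, false; split; first exact: memXr.
have -> : ((x, yz) : V) = (x, 0) + (0, yz) by congr (_, _); rewrite /= ?addr0 ?add0r.
apply: memvD; first exact: (memXl x j false).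
by apply: memXr; apply/eqP; move/negbFE: hb.
Qed.


Lemma i01 : i0 != i1. Proof. by []. Qed.
Lemma gx1 : gx (bv i1) = cf i1. Proof. by rewrite /gx eqxx. Qed.
Lemma gx2 : gx (bv i2) = cf i2.
Proof. rewrite /gx ifN ?eqxx //; apply/eqP => /bv_inj /(congr1 val) //. Qed.
Lemma gx0 : gx (bv i0) = cf i1 + cf i2.
Proof.
rewrite /gx ifN; last by apply/eqP => /bv_inj /(congr1 val).
by rewrite ifN //; apply/eqP => /bv_inj /(congr1 val).
Qed.

Lemma glob_cover (y y' : L) : exists (x : L) (j : 'I_3), x != 0 /\ ((0, y) : V) \in Xs x j false /\ ((0, y') : V) \in Xs x j false.
Proof.
have G0 (x : L) (j : 'I_3) : x != 0 -> fn x j y = 0 -> fn x j y' = 0 ->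
    exists (x : L) (j : 'I_3), x != 0 /\ ((0, y) : V) \in Xs x j false /\ ((0, y') : V) \in Xs x j false.
  by move=> hx h h'; exists x, j; split => //; split; apply: memXr.
have := F2_fano (cf i0 y) (cf i1 y) (cf i2 y) (cf i0 y') (cf i1 y') (cf i2 y').
move=> /orP[/orP[/orP[/orP[/orP[/orP[H|H]|H]|H]|H]|H]|H]; move/andP: H => [/eqP h /eqP h'].
- by apply: (G0 (bv i0) j0); rewrite ?bv_neq0.
- by apply: (G0 (bv i1) j1); rewrite ?bv_neq0 // /fn /= gx1.
- by apply: (G0 (bv i1) j2); rewrite ?bv_neq0 // /fn /= gx1 add_lfunE.
- by apply: (G0 (bv i2) j1); rewrite ?bv_neq0 // /fn /= gx2.
- by apply: (G0 (bv i2) j2); rewrite ?bv_neq0 // /fn /= gx2 add_lfunE.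
- by apply: (G0 (bv i0) j1); rewrite ?bv_neq0 // /fn /= gx0 add_lfunE.
- by apply: (G0 (bv i0) j2); rewrite ?bv_neq0 // /fn /= gx0 !add_lfunE.
Qed.

Definition fam : seq {vspace V} :=
  [seq G ab.1 ab.2 | ab <- enum {: L * L}] ++
  [seq Xs x jb.1 jb.2 | x <- enum (predC1 (0 : L)), jb <- enum {: 'I_3 * bool}].

Lemma fam_dim U : U \in fam -> (\dim U <= k)%N.
Proof.
rewrite mem_cat => /orP[/mapP[ab _ ->]|/allpairsP[[x jb] [_ _ ->]]].
  exact: dimG.
exact: dimX.
Qed.

Lemma size_fam : size fam = (2 ^ (2 * k) + 6 * (2 ^ k - 1))%N.
Proof.
have cL : #|L| = (2 ^ k)%N by [].
rewrite size_cat size_map size_allpairs -!cardE card_prod cardC1 card_prod card_ord card_bool cL.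
by rewrite -expnD addnn -mul2n subn1 [(_ * (3 * 2))%N]mulnC.
Qed.

Lemma memG_fam (a b : L) : G a b \in fam.
Proof. by rewrite mem_cat; apply/orP; left; apply: (map_f (fun ab => G ab.1 ab.2)) (_ : (a, b) \in _); rewrite mem_enum. Qed.

Lemma memX_fam (x : L) (j : 'I_3) (b : bool) : x != 0 -> Xs x j b \in fam.
Proof.
move=> hx; rewrite mem_cat; apply/orP; right.
apply: (allpairs_f (fun x jb => Xs x jb.1 jb.2) (_ : x \in _) (_ : (j, b) \in _)); by rewrite mem_enum.
Qed.

Lemma main_cover (u v : V) : exists2 U, U \in fam & (u \in U) && (v \in U).
Proof.
case: u v => [x1 y1] [x2 y2].
have XC (x yw yz : L) : x != 0 -> exists2 U, U \in fam & (((0, yw) : V) \in U) && (((x, yz) : V) \in U).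
  move=> hx; have [j [b [h h']]] := X_cover x yw yz.
  by exists (Xs x j b); [apply: memX_fam | rewrite h h'].
case: (eqVneq x1 0) => [->|h1].
  case: (eqVneq x2 0) => [->|h2]; last exact: XC.
  have [x [j [hx [h h']]]] := glob_cover y1 y2.
  by exists (Xs x j false); [apply: memX_fam | rewrite h h'].
case: (eqVneq x2 0) => [->|h2].
  by have [U hU /andP[h h']] := XC x1 y2 y1 h1; exists U => //; rewrite h h'.
case: (eqVneq x1 x2) => [<-|h12].
  have [U hU /andP[h h']] := XC x1 (y1 - y2) y2 h1; exists U => //; rewrite h' andbT.
  have -> : ((x1, y1) : V) = (0, y1 - y2) + (x1, y2) by congr (_, _); rewrite /= ?add0r // subrK.
  exact: memvD.
have [a [b [e1 e2]]] := graph_cover y1 y2 h1 h2 h12.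
by exists (G a b); [apply: memG_fam | rewrite -e1 -e2 !memG].
Qed.

End Construction.

Lemma bigmin_le (I : finType) (P : pred I) (F : I -> nat) x0 i0 :
  P i0 -> (\big[minn/x0]_(i | P i) F i <= F i0)%N.
Proof.
move=> Pi0; have : i0 \in index_enum I by rewrite mem_index_enum.
elim: (index_enum I) => [//|j r IH]; rewrite inE big_cons => /orP[/eqP <-|/IH h].
  by rewrite Pi0 geq_minl.
by case: ifP => _ //; exact: leq_trans (geq_minr _ _) h.
Qed.

Lemma exists_ext n k (U : {vspace 'rV['F_2]_n}) : (\dim U <= k)%N -> (k <= n)%N ->
  exists W : {vspace 'rV['F_2]_n}, (U <= W)%VS /\ \dim W = k.
Proof.
move=> hU hk; move: {2}(k - \dim U)%N (erefl (k - \dim U)%N) => d.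
elim: d U hU => [|d IH] U hU hd.
  by exists U; split => //; apply/eqP; rewrite eqn_leq hU -subn_eq0 hd.
have hlt : (\dim U < \dim (fullv : {vspace 'rV['F_2]_n}))%N.
  rewrite dimvf /dim /= mul1n; lia.
have [v hv] : exists v, v \notin U.
  apply/existsP; rewrite -negb_forall; apply/negP => /forallP hall.
  have : (fullv <= U)%VS by apply/subvP => v _; exact: hall.
  by move/dimvS; rewrite leqNgt hlt.
have hd1 : \dim (U + <[v]>)%VS = (\dim U).+1.
  have := dimv_sum_cap U <[v]>.
  have -> : (U :&: <[v]> = 0)%VS.
    apply/eqP; rewrite -subv0; apply/subvP => w /memv_capP[wU /vlineP[c wE]].
    rewrite memv0 wE; case: (F2_cases c) wE => -> wE; rewrite ?scale0r ?eqxx //.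
    by move: wU; rewrite wE scale1r => vU; rewrite vU in hv.
  rewrite dimv0 dim_vline addn0 => ->.
  have : v != 0 by apply: contraNneq hv => ->; rewrite mem0v.
  by move=> ->; rewrite addn1.
have h1 : (\dim (U + <[v]>)%VS <= k)%N by rewrite hd1; lia.
have h2 : (k - \dim (U + <[v]>)%VS)%N = d by rewrite hd1; lia.
have [W [hW1 hW2]] := IH _ h1 h2.
by exists W; split => //; apply: subv_trans hW1; apply: addvSl.
Qed.

Import VectorInternalTheory.
Section Transfer.
Variables (k : nat) (F0 : finFieldType) (chF : 2 \in [pchar F0]) (cardF : #|F0| = (2 ^ k)%N).
Hypothesis k3 : (3 <= k)%N.
Local Notation L := (LL chF).
Local Notation V := (L * L)%type.
Local Notation n0 := (dim V).

Lemma n0E : n0 = (2 * k)%N.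
Proof.
have -> : n0 = (dim L + dim L)%N by [].
by rewrite -dimvf (dimL chF cardF) mul2n addnn.
Qed.

Definition fr : 'Hom(V, 'rV['F_2]_n0) := linfun v2r.
Definition ext (U : {vspace 'rV['F_2]_n0}) : {vspace 'rV['F_2]_n0} :=
  odflt U [pick W : {vspace 'rV['F_2]_n0} | (U <= W)%VS && (\dim W == k)].

Lemma ext_sub U : (U <= ext U)%VS.
Proof. by rewrite /ext; case: pickP => [W /andP[h _]|_] //=; apply: subv_refl. Qed.

Lemma ext_dim U : (\dim U <= k)%N -> \dim (ext U) = k.
Proof.
move=> hU; rewrite /ext; case: pickP => [W /andP[_ /eqP e] //|none].
have hk : (k <= n0)%N by rewrite n0E; lia.
have [W [h e]] := exists_ext hU hk.
by have := none W; rewrite h e eqxx.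
Qed.

Definition Cset : {set {vspace 'rV['F_2]_n0}} :=
  [set W in map (fun U => ext (fr @: U)) (fam chF cardF k3)].

Lemma two_dim (W : {vspace 'rV['F_2]_n0}) : \dim W = 2%N ->
  exists u v, W = (<[u]> + <[v]>)%VS.
Proof.
move=> hW; have /andP[/eqP hs _] := vbasisP W.
move: hs; have : size (vbasis W) = 2%N by rewrite size_tuple hW.
case: (tval (vbasis W)) => [|u [|v [|]]] //= _ <-.
by exists u, v; rewrite span_cons span_seq1.
Qed.

Lemma Cset_cov : is_q_covering k 2 Cset.
Proof.
apply/andP; split.
  apply/forallP => W; apply/implyP; rewrite inE => /mapP[U hU ->].
  apply/eqP; apply: ext_dim; apply: leq_trans (dim_img_le _ _) _.
  exact: fam_dim hU.
apply/forallP => W; apply/implyP => /eqP hW.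
have [u [v eW]] := two_dim hW.
have [U hU /andP[hu hv]] := main_cover cardF k3 (r2v u) (r2v v).
apply/existsP; exists (ext (fr @: U)); apply/andP; split.
  by rewrite inE; apply: (map_f (fun U => ext (fr @: U))).
apply: subv_trans (ext_sub _).
rewrite eW subv_add -!memvE.
have -> : u = fr (r2v u) by rewrite lfunE; exact: (esym (r2vK u)).
have -> : v = fr (r2v v) by rewrite lfunE; exact: (esym (r2vK v)).
by rewrite !memv_img.
Qed.

Lemma cover_bound : (q_covering_number 'F_2 n0 k 2 <= 2 ^ (2 * k) + 6 * (2 ^ k - 1))%N.
Proof.
rewrite /q_covering_number; apply: leq_trans (bigmin_le (fun C : {set {vspace 'rV['F_2]_n0}} => #|C|) _ Cset_cov) _.
by rewrite cardsE -(size_fam chF cardF k3) -(size_map (fun U => ext (fr @: U))) card_size.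
Qed.

End Transfer.

Local Close Scope ring_scope.

Theorem mainTheorem7 (k : nat) : 3 <= k ->
  q_covering_number 'F_2 (2 * k) k 2 <= 2 ^ (2 * k) + 6 * (2 ^ k - 1).
Proof.
move=> k3.
have [F0 chF cardF] := @pPrimePowerField 2 k (isT : prime 2) (leq_trans (isT : (0 < 3)%N) k3).
have := cover_bound chF cardF k3.
by rewrite (n0E chF cardF).
Qed.
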